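(* For every integer $n \ge 0$, every point $z \in \overline{D}(-\tfrac12 + 2^{2n}, 2^{-(2n+1)})$ has unbounded forward orbit under $f_1(z) = 3z^3 - \tfrac92 z^2 + 1$.
   Context: Let $|\cdot|$ denote the $2$-adic absolute value on $\mathbb{C}_2$, normalized by $|2| = 1/2$. The notation $\overline{D}(a,\delta)$ denotes the closed disk $\{z \in \mathbb{C}_2 : |z-a| \le \delta\}$. Here $f_1$ is the member with $t=1$ of the family $f_t(z) = -\tfrac32 t(-2z^3+3z^2)+1$. *)

(* Defs.v *)
From mathcomp Require Import all_boot all_order all_algebra.
From mathcomp Require Import reals.
Set Implicit Arguments. Unset Strict Implicit. Unset Printing Implicit Defensive.
Import Order.TTheory GRing.Theory Num.Theory.
Local Open Scope ring_scope.

(* [abs] is a non-archimedean absolute value on K normalized by |2| = 1/2,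
   i.e. it restricts to the 2-adic absolute value on Q. *)
Definition two_adic_abs (K : fieldType) (R : realType) (abs : K -> R) : Prop :=
  [/\ forall x, 0 <= abs x,
      forall x, abs x = 0 <-> x = 0,
      forall x y, abs (x * y) = abs x * abs y,
      forall x y, abs (x + y) <= Num.max (abs x) (abs y)
    & abs 2%:R = 2%:R^-1].

Definition abs_complete (K : fieldType) (R : realType) (abs : K -> R) : Prop :=
  forall u : nat -> K,
    (forall e : R, 0 < e -> exists N : nat, forall m n : nat,
        (N <= m)%N -> (N <= n)%N -> abs (u m - u n) < e) ->
    exists l : K, forall e : R, 0 < e -> exists N : nat, forall n : nat,
        (N <= n)%N -> abs (u n - l) < e.

Definition f_t (K : fieldType) (t z : K) : K :=
  - (3%:R / 2%:R) * t * (- 2%:R * z ^+ 3 + 3%:R * z ^+ 2) + 1.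

Definition f1 (K : fieldType) (z : K) : K := f_t 1 z.

Definition closed_disk (K : fieldType) (R : realType) (abs : K -> R)
  (a : K) (delta : R) : K -> Prop := fun z => abs (z - a) <= delta.

Definition unbounded_orbit (K : fieldType) (R : realType) (abs : K -> R)
  (f : K -> K) (z : K) : Prop :=
  ~ (exists M : R, forall k : nat, abs (iter k f z) <= M).

(* Main.v *)
Require Import Defs.
From mathcomp Require Import all_boot all_order all_algebra.
From mathcomp Require Import reals.
From mathcomp Require Import ring lra.
Import Order.TTheory GRing.Theory Num.Theory.
Set Implicit Arguments.
Local Open Scope ring_scope.

Lemma abs_le (R : realType) (K : fieldType) (abs : K -> R)
  (habs : two_adic_abs abs) (x y : K) (e : R) :
  abs x <= e -> abs y <= e -> abs (x + y) <= e.
Proof.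
case: habs => _ _ _ hu _ hx hy.
apply: le_trans (hu x y) _; rewrite ge_max hx hy //.
Qed.

Lemma abs0 (R : realType) (K : fieldType) (abs : K -> R)
  (habs : two_adic_abs abs) : abs 0 = 0.
Proof. by case: habs => _ h _ _ _; apply/h. Qed.

Lemma abs1 (R : realType) (K : fieldType) (abs : K -> R)
  (habs : two_adic_abs abs) : abs 1 = 1.
Proof.
move: (habs) => [h0 h hm _ _].
have := hm 1 1; rewrite mulr1 => e.
have n0 : abs 1 != 0 by apply/eqP => /h /eqP; rewrite oner_eq0.
by apply: (mulfI n0); rewrite mulr1 -e.
Qed.

Lemma absN1 (R : realType) (K : fieldType) (abs : K -> R)
  (habs : two_adic_abs abs) : abs (-1) = 1.
Proof.
move: (habs) => [h0 _ hm _ _].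
have := hm (-1) (-1); rewrite mulrNN mulr1 (abs1 habs) => e.
have : (abs (-1) - 1) * (abs (-1) + 1) = 0 
  by rewrite (_ : (abs (-1) - 1) * (abs (-1) + 1) = abs (-1) * abs (-1) - 1) ; [by rewrite -e subrr | ring].
move/eqP; rewrite mulf_eq0 => /orP [|]; first by rewrite subr_eq0 => /eqP.
have := h0 (-1); move=> H1 H2; exfalso; move/eqP: H2 => H2; lra.
Qed.

Lemma absN (R : realType) (K : fieldType) (abs : K -> R)
  (habs : two_adic_abs abs) x : abs (- x) = abs x.
Proof.
move: (habs) => [_ _ hm _ _].
by rewrite -mulN1r hm (absN1 habs) mul1r.
Qed.

Lemma absM (R : realType) (K : fieldType) (abs : K -> R)
  (habs : two_adic_abs abs) x y : abs (x * y) = abs x * abs y.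
Proof. by case: habs. Qed.

Lemma absX (R : realType) (K : fieldType) (abs : K -> R)
  (habs : two_adic_abs abs) x k : abs (x ^+ k) = abs x ^+ k.
Proof.
elim: k => [|k IH]; first by rewrite !expr0 (abs1 habs).
by rewrite !exprS (absM habs) IH.
Qed.

Lemma abs_ge0 (R : realType) (K : fieldType) (abs : K -> R)
  (habs : two_adic_abs abs) x : 0 <= abs x.
Proof. by case: habs. Qed.

Lemma abs_strict (R : realType) (K : fieldType) (abs : K -> R)
  (habs : two_adic_abs abs) x y : abs y < abs x -> abs (x + y) = abs x.
Proof.
move=> hlt; move: (habs) => [_ _ _ hu _].
apply/eqP; rewrite eq_le; apply/andP; split.
  by apply: le_trans (hu x y) _; rewrite ge_max lexx ltW.
have := hu (x + y) (- y); rewrite addrK (absN habs).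
case: (leP (abs (x + y)) (abs y)) => h.
  move=> h2; exfalso; lra.
by [].
Qed.

Lemma abs_nat_le1 (R : realType) (K : fieldType) (abs : K -> R)
  (habs : two_adic_abs abs) k : abs (k%:R) <= 1.
Proof.
elim: k => [|k IH]; first by rewrite (abs0 habs).
by rewrite -addn1 natrD; apply: (abs_le habs) => //; rewrite (abs1 habs).
Qed.

Lemma abs_odd (R : realType) (K : fieldType) (abs : K -> R)
  (habs : two_adic_abs abs) m : abs ((m.*2).+1)%:R = 1.
Proof.
rewrite -addn1 natrD addrC abs_strict ?(abs1 habs) //.
rewrite -muln2 natrM (absM habs) mulrC.
move: (habs) => [_ _ _ _ ->].
have := abs_nat_le1 habs m; have := abs_ge0 habs (m%:R); lra.
Qed.

Lemma two_neq0 (R : realType) (K : fieldType) (abs : K -> R)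
  (habs : two_adic_abs abs) : (2%:R : K) != 0.
Proof.
apply/eqP => e; move: (habs) => [_ _ _ _ h2].
by move: h2; rewrite e (abs0 habs) => /esym/eqP; rewrite invr_eq0 pnatr_eq0.
Qed.

Lemma absV (R : realType) (K : fieldType) (abs : K -> R)
  (habs : two_adic_abs abs) x : x != 0 -> abs (x^-1) = (abs x)^-1.
Proof.
move=> nz; move: (habs) => [_ h _ _ _].
have n0 : abs x != 0 by apply/eqP => /h /eqP; rewrite (negbTE nz).
apply: (mulfI n0); rewrite -(absM habs) mulfV // divff // (abs1 habs) //.
Qed.

Lemma f1_id (K : fieldType) (y : K) : (2%:R : K) != 0 ->
  f1 y + (2%:R)^-1 = 3%:R * (y + 2%:R^-1) ^+ 3 - 9%:R * (y + 2%:R^-1) ^+ 2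
     + 27%:R * (2%:R^-1) ^+ 2 * (y + 2%:R^-1).
Proof. move=> h; rewrite /f1 /f_t; field; exact: h. Qed.

Lemma step_id (K : fieldType) (y q : K) : (2%:R : K) != 0 ->
  f1 y - (- 2%:R^-1 + q) =
  27%:R * (2%:R^-1) ^+ 2 * (y - (- 2%:R^-1 + 2%:R * 2%:R * q))
  + 2%:R * 13%:R * q
  - 9%:R * ((y - (- 2%:R^-1 + 2%:R * 2%:R * q)) + 2%:R * 2%:R * q) ^+ 2
  + 3%:R * ((y - (- 2%:R^-1 + 2%:R * 2%:R * q)) + 2%:R * 2%:R * q) ^+ 3.
Proof. move=> h; rewrite /f1 /f_t; field; exact: h. Qed.

Lemma abs2 (R : realType) (K : fieldType) (abs : K -> R)
  (habs : two_adic_abs abs) : abs 2%:R = 2^-1.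
Proof. by case: habs. Qed.

Lemma abst (R : realType) (K : fieldType) (abs : K -> R)
  (habs : two_adic_abs abs) : abs (2%:R^-1) = 2.
Proof. by rewrite (absV habs) ?(two_neq0 habs) // (abs2 habs) invrK. Qed.

Lemma abs3 (R : realType) (K : fieldType) (abs : K -> R)
  (habs : two_adic_abs abs) : abs (3%:R : K) = 1.
Proof. exact: (abs_odd habs 1). Qed.
Lemma abs9 (R : realType) (K : fieldType) (abs : K -> R)
  (habs : two_adic_abs abs) : abs (9%:R : K) = 1.
Proof. exact: (abs_odd habs 4). Qed.
Lemma abs13 (R : realType) (K : fieldType) (abs : K -> R)
  (habs : two_adic_abs abs) : abs (13%:R : K) = 1.
Proof. exact: (abs_odd habs 6). Qed.
Lemma abs27 (R : realType) (K : fieldType) (abs : K -> R)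
  (habs : two_adic_abs abs) : abs (27%:R : K) = 1.
Proof. exact: (abs_odd habs 13). Qed.

Lemma absC27 (R : realType) (K : fieldType) (abs : K -> R)
  (habs : two_adic_abs abs) x :
  abs (27%:R * (2%:R^-1) ^+ 2 * x) = 4%:R * abs x.
Proof.
rewrite !(absM habs) (abs27 habs) (abst habs) mul1r.
congr (_ * _); rewrite -natrM //.
Qed.

Lemma step (R : realType) (K : fieldType) (abs : K -> R)
  (habs : two_adic_abs abs) n y :
  abs (y - (- 2%:R^-1 + 2%:R ^+ (2 * n.+1))) <= (2%:R ^+ (2 * n.+1).+1)^-1 ->
  abs (f1 y - (- 2%:R^-1 + 2%:R ^+ (2 * n))) <= (2%:R ^+ (2 * n).+1)^-1.
Proof.
set q := (2%:R : K) ^+ (2 * n).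
have eq4 : (2%:R : K) ^+ (2 * n.+1) = 2%:R * 2%:R * q.
  by rewrite /q mulnS exprD expr2.
set s := ((2%:R : R)^-1) ^+ (2 * n).
have r1 : ((2%:R : R) ^+ (2 * n.+1).+1)^-1 = s / 8%:R.
  by rewrite -exprVn mulnS -addSn exprD /s; field.
have r0 : ((2%:R : R) ^+ (2 * n).+1)^-1 = s / 2%:R.
  by rewrite -exprVn exprSr /s; field.
have aq : abs q = s by rewrite /q (absX habs) (abs2 habs).
have s0 : 0 <= s by rewrite /s exprn_ge0 // invr_ge0.
have s1 : s <= 1 by rewrite /s; apply: exprn_ile1; rewrite ?invr_ge0 ?invf_le1 ?ler1n //.
rewrite eq4 r1 r0 (@step_id K y q (two_neq0 habs)).
set w := y - _ => hw.
have a4q : abs (2%:R * 2%:R * q) = s / 4%:R.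
  by rewrite !(absM habs) aq (abs2 habs); field.
have hu : abs (w + 2%:R * 2%:R * q) <= s / 4%:R.
  apply: (abs_le habs) => //; first lra; by rewrite a4q.
set u := w + _ in hu.
have u0 := abs_ge0 habs u.
apply: (abs_le habs); [apply: (abs_le habs); [apply: (abs_le habs)|rewrite (absN habs)]|].
- rewrite (absC27 habs); lra.
- rewrite !(absM habs) aq (abs2 habs) (abs13 habs); lra.
- rewrite !(absM habs) (abs9 habs) mul1r; nra.
- rewrite !(absM habs) (abs3 habs) mul1r; nra.
Qed.

Lemma base (R : realType) (K : fieldType) (abs : K -> R)
  (habs : two_adic_abs abs) y :
  abs (y - (- 2%:R^-1 + 2%:R ^+ (2 * 0))) <= (2%:R ^+ (2 * 0).+1)^-1 ->
  4%:R <= abs (f1 y + 2%:R^-1).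
Proof.
rewrite muln0 expr0 expr1 (@f1_id K y (two_neq0 habs)) => hw.
set u := y + _.
have eu : u = 1 + (y - (- 2%:R^-1 + 1)) by rewrite /u; ring.
have au : abs u = 1.
  rewrite eu (abs_strict habs) ?(abs1 habs) //; lra.
rewrite addrC (abs_strict habs) (absC27 habs) au ?mulr1 //.
apply: le_lt_trans (_ : 1 < 4%:R); last lra.
apply: (abs_le habs); last rewrite (absN habs).
- by rewrite !(absM habs) (abs3 habs) au !mul1r.
- by rewrite !(absM habs) (abs9 habs) au !mul1r.
Qed.

Lemma escape_u (R : realType) (K : fieldType) (abs : K -> R)
  (habs : two_adic_abs abs) (u : K) :
  4%:R <= abs u ->
  abs u + 4%:R <= abs (3%:R * u ^+ 3 - 9%:R * u ^+ 2 + 27%:R * (2%:R^-1) ^+ 2 * u).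
Proof.
move=> hu.
rewrite -addrA (abs_strict habs).
  rewrite !(absM habs) (abs3 habs) mul1r; nra.
rewrite !(absM habs) (abs3 habs) mul1r.
apply: (@le_lt_trans _ _ (abs u * abs u * abs u / 4%:R)); last nra.
apply: (abs_le habs); first rewrite (absN habs).
- rewrite !(absM habs) (abs9 habs) mul1r; nra.
- rewrite (absC27 habs); nra.
Qed.

Lemma escape (R : realType) (K : fieldType) (abs : K -> R)
  (habs : two_adic_abs abs) y :
  4%:R <= abs (y + 2%:R^-1) -> abs (y + 2%:R^-1) + 4%:R <= abs (f1 y + 2%:R^-1).
Proof.
rewrite (@f1_id K y (two_neq0 habs)); exact: escape_u.
Qed.

Theorem mainTheorem8 (R : realType) (K : closedFieldType) (abs : K -> R)
  (habs : two_adic_abs abs) (hcomplete : abs_complete abs) (n : nat) (z : K) :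
  closed_disk abs (- (2%:R^-1) + 2%:R ^+ (2 * n)) ((2%:R ^+ (2 * n).+1)^-1) z ->
  unbounded_orbit abs (@f1 K) z.
Proof.
rewrite /closed_disk => hz [M hM].
have H0 : forall m y, abs (y - (- 2%:R^-1 + 2%:R ^+ (2 * m))) <= (2%:R ^+ (2 * m).+1)^-1 ->
    4%:R <= abs (f1 (iter m (@f1 K) y) + 2%:R^-1).
  elim => [|m IH] y hy; first exact: (base habs).
  by rewrite iterSr; apply: IH; apply: (step habs).
have H1 : forall k w, 4%:R <= abs (w + 2%:R^-1) ->
    4%:R + 4%:R * k%:R <= abs (iter k (@f1 K) w + 2%:R^-1).
  elim => [|k IH] w hw; first by rewrite mulr0 addr0.
  have := IH w hw; have : (0 : R) <= k%:R by rewrite ler0n.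
  rewrite iterS -addn1 natrD => k0 h1.
  have := escape habs (iter k (@f1 K) w) (ltac:(lra)); lra.
have M0 : 0 <= M by apply: le_trans (hM 0%N); exact: abs_ge0.
set k := Num.Def.archi_bound M.
have hk := archi_boundP M0; rewrite -/k in hk.
have h2 := H1 k _ (H0 n z hz).
rewrite -iterS -iterD in h2.
set a := iter _ _ _ in h2.
have ha := hM (k + n.+1)%N; rewrite -/a in ha.
move: (habs) => [_ _ _ hu _].
have := hu a (2%:R^-1); rewrite (abst habs).
have k0 : (0 : R) <= k%:R by rewrite ler0n.
case: (leP (abs a) 2) => h; lra.
Qed.
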